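(* Consider the system $x[k+1]=Ax[k]+Bu[k]+w[k]$, $y[k]=x[k]+v[k]$ in closed loop with the controller $x_K[k+1]=A_Kx_K[k]+B_Ky[k]$, $u[k]=C_Kx_K[k]+D_Ky[k]$ ($x\in\mathbb{R}^n$, $x_K\in\mathbb{R}^{n_K}$), with closed-loop matrices $$A_{CL}=\begin{bmatrix}A+BD_K & BC_K\\ B_K & A_K\end{bmatrix},\qquad B_{CL}=\begin{bmatrix}I_n & BD_K\\ O & B_K\end{bmatrix}.$$ Let $\eta\in(0,1)$, let $\widetilde H_I\in\mathbb{R}^{(n+n_K)\times(n+n_K)}$ with $\det(\widetilde H_I)\neq0$, and let $$\widetilde\Omega_I:=\{\xi\in\mathbb{R}^{n+n_K}:-1_{n+n_K}\le\widetilde H_I\xi\le 1_{n+n_K}\}.$$ Let $\varepsilon_s$ satisfy $\varepsilon_p+\varepsilon_m<\varepsilon_s<1$, and assume: C1) $A_{CL}\widetilde\Omega_I\oplus B_{CL}\mathcal{Z}\subseteq\eta\,\widetilde\Omega_I$; C2) $[I_n\ O]\,\widetilde\Omega_I\subseteq(\varepsilon_s-\varepsilon_p-\varepsilon_m)\,\mathcal{S}$. Then: (a) the set $\Omega_I:=[I_n\ O]\widetilde\Omega_I\oplus\mathcal{N}$ satisfies: I1) $\Omega_I\subseteq\varepsilon_s\mathcal{S}$; I2) $\{r\in\mathbb{R}^n:\|r\|\le\alpha\}\subseteq\Omega_I\ominus\mathcal{N}$ with $\alpha=1/\|\widetilde H_I\|$; I3) $\bigoplus_{i=0}^N[I_n\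 O]A_{CL}^iB_{CL}\mathcal{Z}\subseteq\beta(\Omega_I\ominus\mathcal{N})$ for all $N\in\mathbb{N}$, with $\beta=\eta$; (b) the matrix $A_{CL}$ is Schur.
   Context: Notation: $\oplus$ Minkowski sum, $\ominus$ Pontryagin difference ($\mathcal{X}\ominus\mathcal{Y}=\{x:x+y\in\mathcal{X}\ \forall y\in\mathcal{Y}\}$), $(-\mathcal{V})=\{-v:v\in\mathcal{V}\}$, $1_p$ the all-ones vector of dimension $p$, vector inequalities componentwise, $\|\cdot\|$ the Euclidean norm / induced matrix 2-norm, $[I_n\ O]$ the projection onto the first $n$ coordinates. Standing assumptions: $\mathcal{W},\mathcal{V},\mathcal{D},\mathcal{S},\mathcal{X}\subset\mathbb{R}^n$ are polytopes containing the origin in their interiors, $\mathcal{S}\subset\mathcal{X}$; $\varepsilon_p,\varepsilon_m\in(0,1)$ satisfy $\mathcal{V}\subseteq\varepsilon_p\mathcal{S}$ and $(-\mathcal{V})\subseteq\varepsilon_m\mathcal{S}$; some closed Euclidean ball of positive radius centered at $0$ lies in $\mathcal{S}$; $A\mathcal{S}\oplus\mathcal{W}\oplus\mathcal{D}\subseteq\mathcal{X}$. Define $\mathcal{Z}:=\mathcal{W}\times\mathcal{V}\subset\mathbb{R}^{2n}$ and $\mathcal{N}:=(-\mathcal{V})\oplus\mathcal{V}$. *)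

(* Defs.v *)
From HB Require Import structures.
From mathcomp Require Import all_boot all_order all_algebra.
From mathcomp Require Import boolp classical_sets reals.
From mathcomp Require Import complex.
Set Implicit Arguments.
Unset Strict Implicit.
Unset Printing Implicit Defensive.
Import Order.TTheory GRing.Theory Num.Theory.
Local Open Scope ring_scope.
Local Open Scope classical_set_scope.

Section Defs.
Variable R : realType.

Definition vnorm {n} (x : 'cV[R]_n) : R := Num.sqrt (\sum_i (x i 0) ^+ 2).

Definition mnorm2 {p q} (M : 'M[R]_(p, q)) : R :=
  sup [set vnorm (M *m x) | x in [set x : 'cV[R]_q | vnorm x <= 1]].

Definition cball0 n (r : R) : set 'cV[R]_n := [set x | vnorm x <= r].

Definition msum {n} (X Y : set 'cV[R]_n) : set 'cV[R]_n :=
  [set x + y | x in X & y in Y].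

Definition pdiff {n} (X Y : set 'cV[R]_n) : set 'cV[R]_n :=
  [set x | forall y, Y y -> X (x + y)].

Definition sscale {n} (c : R) (X : set 'cV[R]_n) : set 'cV[R]_n :=
  [set c *: x | x in X].

Definition limage {p q} (M : 'M[R]_(p, q)) (X : set 'cV[R]_q) : set 'cV[R]_p :=
  [set M *m x | x in X].

Definition sneg {n} (X : set 'cV[R]_n) : set 'cV[R]_n := [set - x | x in X].

Definition sprod {n m} (W : set 'cV[R]_n) (V : set 'cV[R]_m) : set 'cV[R]_(n + m) :=
  [set col_mx w v | w in W & v in V].

Fixpoint msum_iter {n} (F : nat -> set 'cV[R]_n) (N : nat) : set 'cV[R]_n :=
  match N with
  | O => F 0%N
  | S N' => msum (msum_iter F N') (F N)
  end.

Definition polytope {n} (P : set 'cV[R]_n) : Prop :=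
  (exists (p : nat) (H : 'M[R]_(p, n)) (h : 'cV[R]_p),
      P = [set x | forall i, (H *m x) i 0 <= h i 0])
  /\ (exists M : R, forall x, P x -> vnorm x <= M).

Definition zero_interior {n} (P : set 'cV[R]_n) : Prop :=
  exists r : R, 0 < r /\ [set x | vnorm x < r] `<=` P.

Definition schur {n} (A : 'M[R]_n) : Prop :=
  forall z : R[i], eigenvalue (map_mx (fun x : R => (x%:C)%C) A) z -> `|z| < 1.

Definition box_set {p} (H : 'M[R]_p) : set 'cV[R]_p :=
  [set xi | forall i, -1 <= (H *m xi) i 0 <= 1].

End Defs.

(* Main.v *)
Set Warnings "-all".
Require Import Defs.
From HB Require Import structures.
From mathcomp Require Import all_boot all_order all_algebra.
From mathcomp Require Import boolp classical_sets reals.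
From mathcomp Require Import complex.
From mathcomp Require Import ring lra.
Import Order.TTheory GRing.Theory Num.Theory.
Local Open Scope ring_scope.
Local Open Scope classical_set_scope.

Section VN.
Context {R : realType}.

Lemma vnorm_ge0 {n} (x : 'cV[R]_n) : 0 <= vnorm x.
Proof. exact: sqrtr_ge0. Qed.

Lemma sum_sq_ge0 {n} (x : 'cV[R]_n) : 0 <= \sum_i (x i 0) ^+ 2.
Proof. by apply: sumr_ge0 => i _; exact: sqr_ge0. Qed.

Lemma vnorm_coord {n} (x : 'cV[R]_n) i : `|x i 0| <= vnorm x.
Proof.
rewrite /vnorm -sqrtr_sqr ler_sqrt ?sum_sq_ge0 //.
rewrite (bigD1 i) //= lerDl; apply: sumr_ge0 => j _; exact: sqr_ge0.
Qed.

Lemma vnorm0 {n} : vnorm (0 : 'cV[R]_n) = 0.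
Proof. by rewrite /vnorm big1 ?sqrtr0 // => i _; rewrite mxE expr0n. Qed.

Lemma vnorm_eq0 {n} (x : 'cV[R]_n) : vnorm x = 0 -> x = 0.
Proof.
move=> /eqP; rewrite /vnorm sqrtr_eq0 => h.
have h0 : \sum_i (x i 0) ^+ 2 = 0 by apply/eqP; rewrite eq_le h sum_sq_ge0.
apply/matrixP => i j; rewrite ord1 mxE.
have /psumr_eq0P H := h0.
have := H (fun i _ => sqr_ge0 (x i 0)) i isT.
by move/eqP; rewrite expf_eq0 /= => /eqP.
Qed.

Lemma vnormZ {n} (c : R) (x : 'cV[R]_n) : vnorm (c *: x) = `|c| * vnorm x.
Proof.
rewrite /vnorm -sqrtr_sqr -sqrtrM ?sqr_ge0 //; congr Num.sqrt.
rewrite mulr_sumr; apply: eq_bigr => i _; by rewrite mxE exprMn.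
Qed.

Lemma vnorm_colmx0 {n} k (r : 'cV[R]_n) : vnorm (col_mx r (0 : 'cV[R]_k)) = vnorm r.
Proof.
rewrite /vnorm big_split_ord /=; congr Num.sqrt.
rewrite [X in _ + X]big1 ?addr0; last by move=> i _; rewrite col_mxEd mxE expr0n.
by apply: eq_bigr => i _; rewrite col_mxEu.
Qed.

Lemma vnorm_bounded {p q} (M : 'M[R]_(p, q)) :
  exists C, forall x : 'cV[R]_q, vnorm x <= 1 -> vnorm (M *m x) <= C.
Proof.
pose c (i : 'I_p) : R := \sum_j `|M i j|.
exists (Num.sqrt (\sum_i (c i) ^+ 2)) => x hx.
rewrite /vnorm ler_sqrt; last by apply: sumr_ge0 => i _; exact: sqr_ge0.
apply: ler_sum => i _.
have hb : `|(M *m x) i 0| <= c i.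
  rewrite mxE; apply: (le_trans (ler_norm_sum _ _ _)); apply: ler_sum => j _.
  rewrite normrM -[X in _ <= X]mulr1; apply: ler_wpM2l => //.
  exact: le_trans (vnorm_coord x j) hx.
rewrite -(@real_normK _ ((M *m x) i 0)) ?num_real //.
have := normr_ge0 ((M *m x) i 0); move: hb; set a := `|_|; set b := c i.
move=> hb ha; rewrite !expr2; exact: ler_pM.
Qed.

Lemma mnorm2_ub {p q} (M : 'M[R]_(p, q)) (x : 'cV[R]_q) :
  vnorm (M *m x) <= mnorm2 M * vnorm x.
Proof.
have hub : has_ubound [set vnorm (M *m x) | x in [set x : 'cV[R]_q | vnorm x <= 1]].
  have [C hC] := vnorm_bounded M; exists C => y [z hz <-]; exact: hC.
have ub := ub_le_sup hub.
have [/vnorm_eq0 ->|] := eqVneq (vnorm x) 0.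
  by rewrite mulmx0 !vnorm0 mulr0.
move=> hne; have hpos : 0 < vnorm x by rewrite lt_def hne vnorm_ge0.
have h1 : vnorm ((vnorm x)^-1 *: x) <= 1.
  by rewrite vnormZ ger0_norm ?invr_ge0 ?vnorm_ge0 // mulVf.
have := ub (vnorm (M *m ((vnorm x)^-1 *: x))) (ex_intro2 _ _ ((vnorm x)^-1 *: x) h1 erefl).
rewrite -scalemxAr vnormZ ger0_norm ?invr_ge0 ?vnorm_ge0 //.
by rewrite ler_pdivrMl // mulrC.
Qed.

End VN.
Section SetL.
Context {R : realType}.

Lemma polytope_conv {n} {P : set 'cV[R]_n} {a b : R} {x y} :
  polytope P -> 0 < a -> 0 < b -> P x -> P y -> sscale (a + b) P (a *: x + b *: y).
Proof.
move=> [[p [H [h ->]]] _] ha hb Px Py.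
have hab : 0 < a + b by rewrite addr_gt0.
exists ((a + b)^-1 *: (a *: x + b *: y)); last first.
  by rewrite scalerA divff ?scale1r // gt_eqF.
move=> i /=; rewrite -scalemxAr mulmxDr -!scalemxAr !mxE.
have px := Px i; have py := Py i; rewrite /= mxE in px; rewrite /= mxE in py.
rewrite ler_pdivrMl // mulrDl lerD // ler_pM2l //.
Qed.

Lemma box_scale {p} (H : 'M[R]_p) (t : R) x :
  0 <= t <= 1 -> box_set H x -> box_set H (t *: x).
Proof.
move=> /andP[t0 t1] hx i; rewrite -scalemxAr mxE.
have /andP[l u] := hx i; set v := (H *m x) i 0 in l u *.
apply/andP; split; nra.
Qed.

Lemma box0 {p} (H : 'M[R]_p) : box_set H 0.
Proof. by move=> i; rewrite mulmx0 mxE lerN10 ler01. Qed.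

Lemma zi0 {n} {P : set 'cV[R]_n} : zero_interior P -> P 0.
Proof. by move=> [r [r0 hr]]; apply: hr; rewrite /= vnorm0. Qed.

End SetL.
Section Schur.
Context {R : realType}.

Local Notation nc := (@Normc.normc R).
Local Notation Re := (@complex.Re R).

Lemma Re_le_normc (w : R[i]) : `|Re w| <= nc w.
Proof.
case: w => a b; rewrite /Normc.normc /= -sqrtr_sqr ler_sqrt ?addr_ge0 ?sqr_ge0 //.
by rewrite lerDl sqr_ge0.
Qed.

Lemma Re_conj_mul (w : R[i]) : Re ((w^*)%C * w) = nc w ^+ 2.
Proof.
case: w => a b; rewrite /Normc.normc sqr_sqrtr ?addr_ge0 ?sqr_ge0 //=.
by ring.
Qed.

Lemma normc_conj (w : R[i]) : nc ((w^*)%C) = nc w.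
Proof. by case: w => a b; rewrite /Normc.normc /= sqrrN. Qed.

Lemma Re_realM (x : R) (w : R[i]) : Re ((x%:C)%C * w) = x * Re w.
Proof. by case: w => a b /=; rewrite mul0r subr0. Qed.

Lemma re_mul {p k} (P : 'M[R]_(p, k)) (u : R[i]) (c : 'cV[R[i]]_k) j :
  (P *m (\col_l Re (u * c l 0))) j 0 = Re (u * (map_mx (real_complex R) P *m c) j 0).
Proof.
rewrite !mxE mulr_sumr.
apply: (big_ind2 (fun x y => x = Re y)) => //.
  by move=> x1 x2 y1 y2 -> ->; case: x2 => ? ?; case: y2.
by move=> l _; rewrite !mxE mulrCA Re_realM.
Qed.


Lemma eig_col {k} (M : 'M[R[i]]_k) z : eigenvalue M z ->
  exists2 c : 'cV[R[i]]_k, M *m c = z *: c & c != 0.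
Proof.
move=> ev.
have ev' : eigenvalue M^T z.
  move: ev; rewrite /eigenvalue /eigenspace !kermx_eq0 !row_free_unit.
  have -> : M^T - z%:M = (M - z%:M)^T by rewrite linearB /= tr_scalar_mx.
  by rewrite unitmx_tr => h.
case/eigenvalueP: ev' => v hv v0.
exists v^T; first by rewrite -[M in LHS]trmxK -trmx_mul hv linearZ.
by apply: contra v0 => /eqP/(congr1 trmx); rewrite trmxK linear0 => ->.
Qed.

Lemma nc_lt1 (z : R[i]) : nc z < 1 -> `|z| < 1.
Proof.
case: z => a b; rewrite normc_def /= => h.
have -> : (1 : R[i]) = ((1 : R)%:C)%C by [].
by rewrite ltcR.
Qed.

Lemma schur_gauge {k} (H Ac : 'M[R]_k) (eta : R) :
  \det H != 0 -> 0 < eta -> eta < 1 ->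
  (forall x, box_set H x -> sscale eta (box_set H) (Ac *m x)) -> schur Ac.
Proof.
move=> dH e0 e1 inv z.
change (eigenvalue (map_mx (real_complex R) Ac) z -> `|z| < 1).
move=> /eig_col [c hc c0].
pose H' := map_mx (real_complex R) H.
pose w := H' *m c.
have Hu : H' \in unitmx.
  rewrite unitmxE det_map_mx unitfE; apply: contra dH => /eqP.
  by move/(congr1 (@complex.Re R)) => /= ->.
have w0 : w != 0.
  by apply: contra c0 => /eqP w0; rewrite -(mulKmx Hu c) -/w w0 mulmx0.
have [i0 hi0] : exists i0, w i0 0 != 0.
  apply/existsP; apply: contraR w0 => /existsPn h; apply/eqP/matrixP => i j.
  by rewrite ord1 [RHS]mxE; apply/eqP; apply/negPn; exact: h.
pose i := Order.arg_max i0 xpredT (fun j => nc (w j 0)).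
have imax : forall j, nc (w j 0) <= nc (w i 0).
  by rewrite /i; case: arg_maxP => //= i1 _ h j; exact: h.
set Mx := nc (w i 0) in imax.
have nc_ge0 : forall x : R[i], 0 <= nc x by move=> [? ?]; exact: sqrtr_ge0.
have Mx0 : 0 < Mx.
  apply: lt_le_trans (imax i0); rewrite lt_def nc_ge0 andbT.
  by apply: contra hi0 => /eqP/Normc.eq0_normc ->.
pose u := ((z * w i 0)^*)%C.
pose K := nc (z * w i 0).
have hK : K = nc z * Mx by rewrite /K Normc.normcM.
pose r := \col_l Re (u * c l 0).
have Hr : forall j, `|(H *m r) j 0| <= K * Mx.
  move=> j; rewrite re_mul -/H' -/w.
  apply: le_trans (Re_le_normc _) _; rewrite Normc.normcM normc_conj -/K.
  by apply: ler_wpM2l; [rewrite /K; exact: nc_ge0|exact: imax].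
have HAr : (H *m (Ac *m r)) i 0 = K ^+ 2.
  rewrite mulmxA re_mul map_mxM -mulmxA hc -scalemxAr mxE -/H' -/w.
  by rewrite Re_conj_mul.
have [K0|Kn0] := eqVneq K 0.
  apply: nc_lt1; move: K0; rewrite hK => /eqP; rewrite mulf_eq0 (gt_eqF Mx0) orbF.
  by move/eqP ->.
have Kpos : 0 < K by rewrite lt_def Kn0 /K nc_ge0.
have KM : 0 < K * Mx by rewrite mulr_gt0.
have bx : box_set H ((K * Mx)^-1 *: r).
  move=> j; rewrite -scalemxAr mxE -ler_norml normrM ger0_norm; last first.
    by rewrite invr_ge0 ltW.
  by rewrite ler_pdivrMl // mulr1.
have [y hy ey] := inv _ bx.
have : (H *m (Ac *m ((K * Mx)^-1 *: r))) i 0 <= eta.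
  rewrite -ey -scalemxAr mxE; have /andP[_ h1] := hy i.
  by have := ler_wpM2l (ltW e0) h1; rewrite mulr1.
rewrite -!scalemxAr mxE HAr.
have -> : (K * Mx)^-1 * K ^+ 2 = nc z.
  rewrite hK; field.
  by apply/andP; split; [rewrite gt_eqF | move: Kn0; rewrite hK mulf_eq0 negb_or => /andP[]].
by move=> h; apply: nc_lt1; exact: le_lt_trans h e1.
Qed.

End Schur.
Theorem theorem2 (R : realType) (n m nK : nat)
  (A : 'M[R]_n) (B : 'M[R]_(n, m))
  (AK : 'M[R]_nK) (BK : 'M[R]_(nK, n)) (CK : 'M[R]_(m, nK)) (DK : 'M[R]_(m, n))
  (W V D S X : set 'cV[R]_n) (eps_p eps_m eps_s eta : R)
  (HI : 'M[R]_(n + nK))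
  (* standing assumptions *)
  (hW : polytope W) (hV : polytope V) (hD : polytope D)
  (hS : polytope S) (hX : polytope X)
  (hW0 : zero_interior W) (hV0 : zero_interior V) (hD0 : zero_interior D)
  (hS0 : zero_interior S) (hX0 : zero_interior X)
  (hSX : S `<=` X)
  (hep : 0 < eps_p < 1) (hem : 0 < eps_m < 1)
  (hVp : V `<=` sscale eps_p S) (hVm : sneg V `<=` sscale eps_m S)
  (hball : exists r : R, 0 < r /\ @cball0 R n r `<=` S)
  (hASX : msum (msum (limage A S) W) D `<=` X)
  (* hypotheses of the theorem *)
  (heta : 0 < eta < 1)
  (hHI : \det HI != 0)
  (hes : eps_p + eps_m < eps_s < 1) :
  let ACL : 'M[R]_(n + nK) := block_mx (A + B *m DK) (B *m CK) BK AK in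
  let BCL : 'M[R]_(n + nK, n + n) := block_mx 1%:M (B *m DK) 0 BK in
  let Z : set 'cV[R]_(n + n) := sprod W V in
  let Nset : set 'cV[R]_n := msum (sneg V) V in
  let Pn : 'M[R]_(n, n + nK) := row_mx 1%:M 0 in
  let OmegaT : set 'cV[R]_(n + nK) := box_set HI in
  (* C1 *) msum (limage ACL OmegaT) (limage BCL Z) `<=` sscale eta OmegaT ->
  (* C2 *) limage Pn OmegaT `<=` sscale (eps_s - eps_p - eps_m) S ->
  let OmegaI : set 'cV[R]_n := msum (limage Pn OmegaT) Nset in
  let alpha : R := 1 / mnorm2 HI in
  let beta : R := eta in
  ((* I1 *) OmegaI `<=` sscale eps_s S
   /\ (* I2 *) @cball0 R n alpha `<=` pdiff OmegaI Nset
   /\ (* I3 *) (forall N : nat,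
        msum_iter (fun i => limage (Pn *m ACL ^+ i *m BCL) Z) N
          `<=` sscale beta (pdiff OmegaI Nset)))
  /\ (* (b) *) schur ACL.
Proof.
move=> ACL BCL Z Nset Pn OmegaT C1 C2 OmegaI alpha beta.
have W0 := zi0 hW0; have V0 := zi0 hV0.
have Z0 : Z 0 by exists 0 => //; exists 0 => //; rewrite col_mx0.
have Om0 : OmegaT 0 by exact: box0.
have C1' : forall x z, OmegaT x -> Z z -> sscale eta OmegaT (ACL *m x + BCL *m z).
  move=> x z hx hz; apply: C1; exists (ACL *m x); first by exists x.
  by exists (BCL *m z); first by exists z.
have ACLinv : forall x, OmegaT x -> sscale eta OmegaT (ACL *m x).
  by move=> x hx; have := C1' x 0 hx Z0; rewrite mulmx0 addr0.
have etaOm : forall x, sscale eta OmegaT x -> OmegaT x.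
  move=> x [w hw <-]; apply: box_scale => //.
  by case/andP: heta => h1 h2; rewrite ltW // ltW.
have PnOm : forall x, OmegaT x -> pdiff OmegaI Nset (Pn *m x).
  by move=> x hx y hy; exists (Pn *m x); [exists x|exists y].
have [hes1 hes2] : eps_p + eps_m < eps_s /\ eps_s < 1 by case/andP: hes => -> ->.
have [ep0 _] : 0 < eps_p /\ eps_p < 1 by case/andP: hep => -> ->.
have [em0 _] : 0 < eps_m /\ eps_m < 1 by case/andP: hem => -> ->.
split; last first.
  by case/andP: heta => e0 e1; exact: (schur_gauge HI ACL eta hHI e0 e1 ACLinv).
split.
  move=> x [a ha [b hb <-]].
  have [s0 Ss0 e0] := C2 a ha.
  case: hb => u [v1 Vv1 eu] [v2 Vv2 <-].
  have [s1 Ss1 e1] := hVm u (ex_intro2 _ _ v1 Vv1 eu).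
  have [s2 Ss2 e2] := hVp v2 Vv2.
  have c0 : 0 < eps_s - eps_p - eps_m by rewrite subr_gt0 ltrBrDr addrC.
  have [w1 Sw1 ew1] := polytope_conv hS c0 em0 Ss0 Ss1.
  have [w2 Sw2 ew2] := polytope_conv hS (addr_gt0 c0 em0) ep0 Sw1 Ss2.
  exists w2 => //; rewrite -e0 -e1 -e2 addrA -ew1 -ew2; congr (_ *: _).
  lra.
split.
  move=> r hr.
  have -> : r = Pn *m col_mx r (0 : 'cV[R]_nK).
    by rewrite mul_row_col mul1mx mul0mx addr0.
  apply: PnOm => i; rewrite -ler_norml.
  apply: le_trans (vnorm_coord _ _) _; apply: le_trans (mnorm2_ub _ _) _.
  rewrite vnorm_colmx0.
  have [mn0|mn0] := lerP (mnorm2 HI) 0.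
    by apply: le_trans ler01; apply: mulr_le0_ge0 => //; exact: vnorm_ge0.
  have : vnorm r <= alpha := hr.
  by rewrite /alpha -(ler_pM2l mn0) mulrA mulr1 divff ?gt_eqF.
pose F i := limage (Pn *m ACL ^+ i *m BCL) Z.
have claim1 : forall N y, msum_iter F N y -> exists z : nat -> 'cV[R]_(n + n),
    (forall i, Z (z i)) /\ y = Pn *m \sum_(i < N.+1) ACL ^+ i *m BCL *m z i.
  elim=> [|N IH] y /=.
    case=> z0 hz0 <-; exists (fun _ => z0); split => //.
    by rewrite big_ord1 !mulmxA.
  case=> y1 /IH [z [hz ->]] [y2 [z' hz' <-]] <-.
  exists (fun i => if i == N.+1 then z' else z i); split.
    by move=> i; case: ifP.
  rewrite [in RHS]big_ord_recr /= eqxx mulmxDr; congr (_ + _); last by rewrite !mulmxA.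
  congr (_ *m _); apply: eq_bigr => i _.
  by rewrite /= ltn_eqF.
have claim2 : forall N (z : nat -> 'cV[R]_(n + n)), (forall i, Z (z i)) ->
    sscale eta OmegaT (\sum_(i < N.+1) ACL ^+ i *m BCL *m z i).
  elim=> [|N IH] z hz.
    rewrite big_ord1 expr0 mul1mx.
    by have := C1' 0 (z 0%N) Om0 (hz 0%N); rewrite mulmx0 add0r.
  rewrite big_ord_recl expr0 mul1mx addrC.
  have := IH (fun i => z i.+1) (fun i => hz i.+1).
  have -> : \sum_(i < N.+1) ACL ^+ (lift ord0 i) *m BCL *m z (lift ord0 i)
      = ACL *m \sum_(i < N.+1) ACL ^+ i *m BCL *m z i.+1.
    rewrite mulmx_sumr; apply: eq_bigr => i _.
    by rewrite lift0 exprS !mulmxA.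
  move=> /etaOm hin; exact: C1'.
move=> N y /claim1 [z [hz ->]].
have [w hw ew] := claim2 N z hz.
exists (Pn *m w); first exact: PnOm.
by rewrite /beta scalemxAr ew.
Qed.
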